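(* Let $\Delta$ be a compact Hausdorff space, $u\colon\Delta\to\mathbb R$ continuous, $v\colon\Delta\to\mathbb R$ upper semicontinuous, and define $$f(\alpha)=\max_{\bm w\in\Delta}\{v(\bm w):u(\bm w)=\alpha\},\qquad \tau(q)=\min_{\bm w\in\Delta}\{q\,u(\bm w)-v(\bm w)\}$$ (the maximum over the empty set being $-\infty$). Then $f(\alpha)\le\tau^*(\alpha)$ for all $\alpha\in\mathbb R$, and if $\tau$ is supported at $(q,\alpha)$ for some $q\in\mathbb R$ then $f(\alpha)=q\alpha-\tau(q)=\tau^*(\alpha)$. Moreover the following are equivalent: (i) for all $q\in\mathbb R$ and all $\alpha\in\partial\tau(q)$, $\tau$ is supported at $(q,\alpha)$; (ii) $f(\alpha)=\tau^*(\alpha)$ for all $\alpha\in\mathbb R$; (iii) $f$ is a concave function.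
   Context: For $g\colon\mathbb R\to\mathbb R\cup\{-\infty\}$, the concave conjugate is $g^*(\alpha)=\inf_{q\in\mathbb R}(q\alpha-g(q))$. For concave $g$, $\partial g(q)=\{\alpha:\alpha(y-q)+g(q)\ge g(y)\ \forall y\in\mathbb R\}=[\partial^+g(q),\partial^-g(q)]$, where $\partial^\pm g(q)$ are the right/left derivatives. $\tau$ is supported at $(q,\alpha)$ if there is $\bm w\in\Delta$ with $\tau(q)=q\,u(\bm w)-v(\bm w)$ and $u(\bm w)=\alpha$. *)

(* Defs.v *)
From mathcomp Require Import all_boot all_order all_algebra.
From mathcomp Require Import all_classical all_reals all_analysis.
Set Implicit Arguments. Unset Strict Implicit. Unset Printing Implicit Defensive.
Import Order.TTheory GRing.Theory Num.Theory.
Local Open Scope classical_set_scope.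
Local Open Scope ring_scope.

Definition upper_semicontinuous {X : topologicalType} {R : realType} (v : X -> R) :=
  forall x (a : R), v x < a -> exists2 V, nbhs x V & forall y, V y -> v y < a.

Local Open Scope ereal_scope.

Definition fmax {D : Type} {R : realType} (u v : D -> R) (alpha : R) : \bar R :=
  ereal_sup [set (v w)%:E | w in [set w | u w = alpha]].

Definition tau {D : Type} {R : realType} (u v : D -> R) (q : R) : \bar R :=
  ereal_inf [set (q * u w - v w)%:E | w in [set: D]].

Definition conj_concave {R : realType} (g : R -> \bar R) (alpha : R) : \bar R :=
  ereal_inf [set (q * alpha)%:E - g q | q in [set: R]].

Definition superdiff {R : realType} (g : R -> \bar R) (q : R) : set R :=
  [set alpha | forall y : R, g y <= (alpha * (y - q))%:E + g q].

Definition supported_at {D : Type} {R : realType} (u v : D -> R) (q alpha : R) : Prop :=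
  exists w : D, tau u v q = (q * u w - v w)%:E /\ u w = alpha.

Definition concave_ext {R : realType} (f : R -> \bar R) : Prop :=
  forall (x y t : R), (0 < t < 1)%R ->
    t%:E * f x + (1 - t)%R%:E * f y <= f (t * x + (1 - t) * y)%R.

(* Main.v *)
Require Import Defs.
From mathcomp Require Import all_boot all_order all_algebra.
From mathcomp Require Import all_classical all_reals all_analysis.
From mathcomp Require Import ring lra.
Import Order.TTheory GRing.Theory Num.Theory numFieldNormedType.Exports.
Local Open Scope classical_set_scope.
Local Open Scope ring_scope.

Lemma seq_cluster (D : topologicalType) (cD : compact [set: D]) (w : nat -> D) :
  exists p : D, forall V : set D, nbhs p V -> forall N, exists n, (N <= n)%N /\ V (w n).
Proof.
have := cD (w @ \oo) _ (filterT : (w @ \oo) setT).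
case=> p [_ Cp]; exists p => V pV N.
have HA : (w @ \oo) (w @` [set n | (N <= n)%N]).
  rewrite /=; exists N => // n /= Nn; by exists n.
case: (Cp _ _ HA pV) => x [[n /= Nn <-] Vx]; by exists n.
Qed.

Lemma usc_cluster {D : topologicalType} {R : realType} {phi : D -> R}
  (sphi : upper_semicontinuous phi) (w : nat -> D) (p : D)
  (Hp : forall V : set D, nbhs p V -> forall N, exists n, (N <= n)%N /\ V (w n))
  (c K : R) (K0 : 0 <= K) (H : forall n, c - K / n.+1%:R <= phi (w n)) :
  c <= phi p.
Proof.
rewrite leNgt; apply/negP => Hlt.
have H1 : phi p < (phi p + c) / 2 by rewrite ltr_pdivlMr // mulr2n mulrDr mulr1 ltrD2l.
have [V pV HV] := sphi p _ H1.
set d := c - (phi p + c) / 2.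
have d0 : 0 < d by rewrite subr_gt0 ltr_pdivrMr // mulr2n mulrDr mulr1 ltrD2r.
have [n [Nn Vn]] := Hp V pV (Num.Def.archi_bound (K / d)).
have := H n; have := HV _ Vn.
have : K / n.+1%:R < d.
  rewrite ltr_pdivrMr // mulrC -ltr_pdivrMr //.
  apply: (lt_le_trans (archi_boundP _)); first by rewrite divr_ge0 // ltW.
  by rewrite ler_nat; apply: leqW.
rewrite /d => h1 h2 h3.
have : c - K / n.+1%:R < (phi p + c) / 2 by apply: le_lt_trans h3 h2.
by rewrite ltrBlDr -ltrBlDl ltNge ltW.
Qed.

Lemma cont_usc {D : topologicalType} {R : realType} {u : D -> R}
  (cu : continuous (u : D -> R^o)) (k : R) : upper_semicontinuous (fun w => k * u w).
Proof.
move=> x a Ha.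
have e0 : 0 < (a - k * u x) / (`|k| + 1) by rewrite divr_gt0 // ?subr_gt0 // ltr_wpDl.
have := (cvgrPdist_lt _ _).1 (cu x) _ e0.
move=> Hn; exists [set y | `|u x - u y| < (a - k * u x) / (`|k| + 1)]; first exact: Hn.
move=> y /= Hy.
have -> : k * u y = k * u x + k * (u y - u x) by ring.
rewrite -ltrBrDl; apply: (le_lt_trans (ler_norm _)).
rewrite normrM distrC.
have k1 : 0 < `|k| + 1 by rewrite ltr_wpDl.
apply: (le_lt_trans (y := (`|k| + 1) * `|u x - u y|)).
  by rewrite ler_wpM2r // lerDl.
by rewrite mulrC -ltr_pdivlMr.
Qed.

Lemma usc_add {D : topologicalType} {R : realType} {f g : D -> R}
  (sf : upper_semicontinuous f) (sg : upper_semicontinuous g) :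
  upper_semicontinuous (fun w => f w + g w).
Proof.
move=> x a Ha.
set d := (a - (f x + g x)) / 2.
have d0 : 0 < d by rewrite divr_gt0 // subr_gt0.
have [Vf xVf Hf] := sf x (f x + d) ltac:(by rewrite ltrDl).
have [Vg xVg Hg] := sg x (g x + d) ltac:(by rewrite ltrDl).
exists (Vf `&` Vg); first exact: filterI.
move=> y [/Hf h1 /Hg h2].
apply: (lt_le_trans (ltrD h1 h2)).
rewrite /d le_eqVlt; apply/orP; left; apply/eqP; field.
by [].
Qed.

Lemma usc_bounded (D : topologicalType) (cD : compact [set: D]) (R : realType)
  (phi : D -> R) (sphi : upper_semicontinuous phi) :
  exists M, forall w, phi w <= M.
Proof.
apply: contrapT => nM.
have Hn : forall n : nat, exists w, n%:R < phi w.
  move=> n; apply: contrapT => hn; apply: nM; exists n%:R => w.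
  by rewrite leNgt; apply/negP => h; apply: hn; exists w.
have [w Hw] := choice Hn.
have [p Hp] := seq_cluster D cD w.
have [V pV HV] := sphi p (phi p + 1) ltac:(by rewrite ltrDl).
have [n [Nn Vn]] := Hp V pV (Num.Def.archi_bound `|phi p + 1|).
have := HV _ Vn; have := Hw n.
have : phi p + 1 < n%:R.
  apply: (le_lt_trans (ler_norm _)); apply: (lt_le_trans (archi_boundP _)) => //.
  by rewrite ler_nat.
move=> h1 h2 h3; have := lt_trans (lt_trans h1 h2) h3.
by rewrite ltxx.
Qed.

Definition trr {D : Type} {R : realType} (u v : D -> R) (q : R) : R := fine (tau u v q).

Lemma tau_le {D : Type} {R : realType} {u v : D -> R} q w :
  (tau u v q <= (q * u w - v w)%:E)%E.
Proof. by apply: ereal_inf_lbound; exists w. Qed.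

Lemma tau_real {D : Type} {R : realType} {u v : D -> R} (w0 : D) {B : R}
  (HB : forall w, `|u w| <= B /\ v w <= B) q :
  tau u v q = (trr u v q)%:E.
Proof.
rewrite /trr fineK // fin_numElt; apply/andP; split.
  apply: (@lt_le_trans _ _ (- `|q| * B - B)%:E); first by rewrite ltNyr.
  apply: le_ereal_inf_tmp => x [w _ <-]; rewrite lee_fin.
  have [h1 h2] := HB w.
  have : - `|q| * B <= q * u w.
    rewrite mulNr lerNl -normrN -mulrN; apply: (le_trans (ler_norm _)).
    by rewrite normrM normrN ler_wpM2l // normrN.
  by move=> h; apply: lerB.
apply: (@le_lt_trans _ _ (q * u w0 - v w0)%:E); first exact: tau_le.
by rewrite ltry.
Qed.

Lemma trr_le {D : Type} {R : realType} {u v : D -> R} (w0 : D) {B : R}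
  (HB : forall w, `|u w| <= B /\ v w <= B) q w :
  trr u v q <= q * u w - v w.
Proof. by rewrite -lee_fin -(tau_real w0 HB); apply: tau_le. Qed.

Lemma trr_adh {D : Type} {R : realType} {u v : D -> R} (w0 : D) {B : R}
  (HB : forall w, `|u w| <= B /\ v w <= B) q e : 0 < e ->
  exists w, q * u w - v w < trr u v q + e.
Proof.
move=> e0.
have : (tau u v q < (trr u v q + e)%:E)%E by rewrite (tau_real w0 HB) lte_fin ltrDl.
by case/ereal_inf_lt => _ [w _ <-]; rewrite lte_fin => h; exists w.
Qed.

Lemma trr_ge {D : Type} {R : realType} {u v : D -> R} (w0 : D) {B : R}
  (HB : forall w, `|u w| <= B /\ v w <= B) q x :
  (forall w, x <= q * u w - v w) -> x <= trr u v q.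
Proof.
move=> H; rewrite -lee_fin -(tau_real w0 HB); apply: le_ereal_inf_tmp => _ [w _ <-].
by rewrite lee_fin.
Qed.

Lemma trr_lip {D : Type} {R : realType} {u v : D -> R} (w0 : D) {B : R}
  (HB : forall w, `|u w| <= B /\ v w <= B) q q' :
  trr u v q <= trr u v q' + `|q - q'| * B.
Proof.
rewrite -lerBlDr; apply: (trr_ge w0 HB) => w.
rewrite lerBlDr; apply: (le_trans (trr_le w0 HB q w)).
have -> : q * u w - v w = q' * u w - v w + (q - q') * u w by ring.
rewrite lerD2l; apply: (le_trans (ler_norm _)); rewrite normrM ler_wpM2l //.
by case: (HB w).
Qed.

Definition gconj {D : Type} {R : realType} (u v : D -> R) (alpha q : R) : R :=
  q * alpha - trr u v q.

Lemma conj_le {D : Type} {R : realType} {u v : D -> R} (w0 : D) {B : R}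
  (HB : forall w, `|u w| <= B /\ v w <= B) alpha q :
  (conj_concave (tau u v) alpha <= (gconj u v alpha q)%:E)%E.
Proof.
apply: ereal_inf_lbound; exists q => //.
by rewrite /gconj (tau_real w0 HB) EFinB.
Qed.

Lemma conj_ge {D : Type} {R : realType} {u v : D -> R} (w0 : D) {B : R}
  (HB : forall w, `|u w| <= B /\ v w <= B) alpha x :
  (forall q, (x <= (gconj u v alpha q)%:E)%E) -> (x <= conj_concave (tau u v) alpha)%E.
Proof.
move=> H; apply: le_ereal_inf_tmp => _ [q _ <-].
by rewrite (tau_real w0 HB) -EFinB; apply: H.
Qed.

Lemma conj_lt {D : Type} {R : realType} {u v : D -> R} (w0 : D) {B : R}
  (HB : forall w, `|u w| <= B /\ v w <= B) alpha x :
  (conj_concave (tau u v) alpha < x)%E -> exists q, ((gconj u v alpha q)%:E < x)%E.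
Proof.
case/ereal_inf_lt => _ [q _ <-] h; exists q.
by move: h; rewrite (tau_real w0 HB) -EFinB.
Qed.

Lemma fmax_ge {D : Type} {R : realType} {u v : D -> R} alpha w :
  u w = alpha -> ((v w)%:E <= fmax u v alpha)%E.
Proof. by move=> h; apply: ereal_sup_ubound; exists w. Qed.

Lemma fmax_le {D : Type} {R : realType} {u v : D -> R} alpha x :
  (forall w, u w = alpha -> ((v w)%:E <= x)%E) -> (fmax u v alpha <= x)%E.
Proof. by move=> H; apply: ge_ereal_sup => _ [w /= hw <-]; apply: H. Qed.

Lemma fmax_gt {D : Type} {R : realType} {u v : D -> R} alpha x :
  (x < fmax u v alpha)%E -> exists w, u w = alpha /\ (x < (v w)%:E)%E.
Proof. by case/ereal_sup_gt => _ [w /= hw <-] h; exists w. Qed.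

Lemma clust3 (D : topologicalType) (cD : compact [set: D]) {R : realType} {u v : D -> R}
  (cu : continuous (u : D -> R^o)) (sv : upper_semicontinuous v)
  (w : nat -> D) (k c1 c2 c3 K : R) (K0 : 0 <= K)
  (H : forall n, c1 - K / n.+1%:R <= u (w n) /\ c2 - K / n.+1%:R <= - u (w n) /\
                 c3 - K / n.+1%:R <= v (w n) + (- k) * u (w n)) :
  exists p, c1 <= u p /\ c2 <= - u p /\ c3 <= v p + (- k) * u p.
Proof.
have [p Hp] := seq_cluster D cD w.
exists p; split; last split.
- rewrite -[u p]mul1r; apply: (usc_cluster (cont_usc cu 1) w p Hp c1 K K0) => n.
  by rewrite mul1r; case: (H n).
- rewrite -mulN1r; apply: (usc_cluster (cont_usc cu (-1)) w p Hp c2 K K0) => n.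
  by rewrite mulN1r; case: (H n) => _ [].
- apply: (usc_cluster (usc_add sv (cont_usc cu (-k))) w p Hp c3 K K0) => n.
  by case: (H n) => _ [].
Qed.

Lemma L_supp (D : topologicalType) (cD : compact [set: D]) {R : realType} {u v : D -> R}
  (cu : continuous (u : D -> R^o)) (sv : upper_semicontinuous v) (w0 : D) {B : R}
  (HB : forall w, `|u w| <= B /\ v w <= B) q alpha :
  (((gconj u v alpha q)%:E <= fmax u v alpha)%E) -> supported_at u v q alpha.
Proof.
move=> Hf.
have Hn : forall n : nat, exists w, u w = alpha /\ gconj u v alpha q - 1 / n.+1%:R < v w.
  move=> n; have : ((gconj u v alpha q - 1 / n.+1%:R)%:E < fmax u v alpha)%E.
    by apply: (lt_le_trans _ Hf); rewrite lte_fin ltrBlDr ltrDl divr_gt0.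
  by case/fmax_gt => w [h1]; rewrite lte_fin => h2; exists w.
have [w Hw] := choice Hn.
have [p [h1 [h2 h3]]] := clust3 D cD cu sv w 0 alpha (- alpha)
   (gconj u v alpha q) 1 ler01 ltac:(move=> n; have [e1 e2] := Hw n;
   rewrite e1 oppr0 mul0r addr0; split; [|split]; [| |exact: ltW];
   by rewrite lerBlDr lerDl divr_ge0).
have up : u p = alpha by apply/le_anti; rewrite h1 andbT -lerN2.
exists p; split => //.
rewrite (tau_real w0 HB); congr (_%:E); apply/le_anti.
rewrite (trr_le w0 HB) /=.
move: h3; rewrite oppr0 mul0r addr0 /gconj up.
by rewrite lerBlDr addrC -lerBlDr.
Qed.

Lemma HB_exists (D : topologicalType) (cD : compact [set: D]) {R : realType} {u v : D -> R}
  (cu : continuous (u : D -> R^o)) (sv : upper_semicontinuous v) :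
  exists B, forall w, `|u w| <= B /\ v w <= B.
Proof.
have [M1 H1] := usc_bounded D cD R _ sv.
have [M2 H2] := usc_bounded D cD R _ (cont_usc cu 1).
have [M3 H3] := usc_bounded D cD R _ (cont_usc cu (-1)).
exists (`|M1| + `|M2| + `|M3|) => w.
have := H1 w; have := H2 w; have := H3 w.
rewrite mul1r mulN1r => h3 h2 h1.
have a1 := ler_norm M1; have a2 := ler_norm M2; have a3 := ler_norm M3.
have b1 := normr_ge0 M1; have b2 := normr_ge0 M2; have b3 := normr_ge0 M3.
split; last by lra.
rewrite ler_norml; apply/andP; split; lra.
Qed.

Lemma sd_iff {D : Type} {R : realType} {u v : D -> R} (w0 : D) {B : R}
  (HB : forall w, `|u w| <= B /\ v w <= B) q alpha :
  superdiff (tau u v) q alpha <-> forall y, gconj u v alpha q <= gconj u v alpha y.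
Proof.
rewrite /superdiff /gconj; split => H y; have := H y;
  rewrite !(tau_real w0 HB) -EFinD lee_fin => h; lra.
Qed.

Lemma part1 {D : Type} {R : realType} {u v : D -> R} (w0 : D) {B : R}
  (HB : forall w, `|u w| <= B /\ v w <= B) alpha :
  (fmax u v alpha <= conj_concave (tau u v) alpha)%E.
Proof.
apply: fmax_le => w hw; apply: (conj_ge w0 HB) => q.
rewrite lee_fin /gconj -hw; have := trr_le w0 HB q w; lra.
Qed.

Lemma part2 {D : Type} {R : realType} {u v : D -> R} (w0 : D) {B : R}
  (HB : forall w, `|u w| <= B /\ v w <= B) q alpha :
  supported_at u v q alpha ->
     fmax u v alpha = ((q * alpha)%:E - tau u v q)%E /\
     ((q * alpha)%:E - tau u v q)%E = conj_concave (tau u v) alpha.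
Proof.
case=> w [ht hw].
have e1 : ((q * alpha)%:E - tau u v q)%E = (v w)%:E.
  by rewrite ht -EFinB -hw; congr (_%:E); ring.
have e2 : (gconj u v alpha q)%:E = (v w)%:E by rewrite /gconj EFinB -(tau_real w0 HB).
rewrite e1.
have l1 := fmax_ge (v:=v) _ _ hw; have l2 := conj_le w0 HB alpha q; have l3 := part1 w0 HB alpha.
rewrite e2 in l2.
split; apply/le_anti; apply/andP; split => //.
- exact: le_trans l3 l2.
- exact: le_trans l1 l3.
Qed.

Lemma key_arith {R : realType} (eta c V s q1 qm y L : R) :
  0 < eta -> 1 <= L -> `|q1| <= L -> qm = q1 + L / 2 -> L / 2 <= y - qm ->
  V + q1 * s <= c + eta -> V + y * s <= c + eta -> c - eta <= V + qm * s ->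
  `|s| <= 4 * eta /\ c - 7 * eta <= V.
Proof.
move=> e0 L1 hq1 hqm hy h1 h2 h3.
move: hq1; rewrite ler_norml => /andP [q1a q1b].
have hqs : qm * s = q1 * s + (s * L) / 2 by rewrite hqm; field.
have a : - (s * L) <= 4 * eta.
  rewrite hqs in h3; move: h1 h3; set A := q1 * s; set S := s * L; move=> h1 h3.
  lra.
have b : s * L <= 4 * eta.
  have [s0|s0] := leP 0 s; last by nra.
  have : s * (y - qm) <= 2 * eta by nra.
  by nra.
have sn : `|s| * L <= 4 * eta.
  have [s0|s0] := leP 0 s; first by rewrite ger0_norm.
  by rewrite ltr0_norm //; lra.
have L0 : 0 < L by lra.
split.
  apply: le_trans sn; rewrite ler_peMr //; exact: normr_ge0.
set r := qm / L; set sg := s * L.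
have hr1 : r <= 3 / 2 by rewrite /r ler_pdivrMr // hqm; lra.
have hr2 : - (1 / 2) <= r by rewrite /r ler_pdivlMr // hqm; lra.
have e : qm * s = r * sg by rewrite /r /sg; field; lra.
have : r * sg <= 6 * eta.
  have p1 : 0 <= (3 / 2 - r) * (sg + 4 * eta) by apply: mulr_ge0; rewrite /sg; lra.
  have p2 : 0 <= (3 / 2 + r) * (4 * eta - sg) by apply: mulr_ge0; rewrite /sg; lra.
  nra.
lra.
Qed.

Lemma gconj_cont {D : Type} {R : realType} {u v : D -> R} (w0 : D) {B : R}
  (HB : forall w, `|u w| <= B /\ v w <= B) alpha :
  continuous (gconj u v alpha : R -> R).
Proof.
move=> x; apply/cvgrPdist_lt => e e0.
have B0 : 0 <= B by apply: le_trans (normr_ge0 _) (HB w0).1.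
have K0 : 0 < `|alpha| + B + 1 by have := normr_ge0 alpha; lra.
have d0 : 0 < e / (`|alpha| + B + 1) by rewrite divr_gt0.
have H := (cvgrPdist_lt _ _).1 (@cvg_id _ (nbhs x)) _ d0.
apply: filterS (H _) => t ht.
rewrite ltr_pdivlMr // in ht.
have l1 := trr_lip w0 HB x t; have l2 := trr_lip w0 HB t x.
rewrite distrC in l2.
have n1 : `|(x - t) * alpha| <= `|x - t| * `|alpha| by rewrite normrM.
move: n1; rewrite ler_norml => /andP [n1 n2].
rewrite /gconj.
have -> : x * alpha - trr u v x - (t * alpha - trr u v t) =
   (x - t) * alpha - (trr u v x - trr u v t) by ring.
have d1 := normr_ge0 (x - t).
move: ht l1 l2 n1 n2 d1; set d := `|x - t|; set m := (x - t) * alpha.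
move=> ht l1 l2 n1 n2 d1.
have hh : d * `|alpha| + d * B <= d * (`|alpha| + B + 1) by rewrite -mulrDr ler_wpM2l // lerDl.
rewrite ltr_norml; apply/andP; split; lra.
Qed.

Lemma stepB {D : Type} {R : realType} {u v : D -> R} (w0 : D) {B : R}
  (HB : forall w, `|u w| <= B /\ v w <= B) alpha (c eta : R) :
  (forall q0, exists y, gconj u v alpha y < gconj u v alpha q0) ->
  conj_concave (tau u v) alpha = c%:E -> 0 < eta ->
  exists w, `|u w - alpha| <= 4 * eta /\ c - 7 * eta <= v w.
Proof.
move=> NA hc e0.
set g := gconj u v alpha.
have gc : forall q, c <= g q by move=> q; rewrite -lee_fin -hc; exact: conj_le.
have [q1 hq1] : exists q1, g q1 < c + eta.
  have : (conj_concave (tau u v) alpha < (c + eta)%:E)%E by rewrite hc lte_fin ltrDl.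
  by case/(conj_lt w0 HB) => q; rewrite lte_fin => h; exists q.
set L := `|q1| + 1.
have L1 : 1 <= L by rewrite /L lerDr.
have L0 : 0 < L by lra.
have ab : q1 - L <= q1 + L by lra.
have [qs qsin qsmin] := EVT_min ab (continuous_subspaceT (gconj_cont w0 HB alpha)).
have [y hy] := NA qs.
have hyout : y < q1 - L \/ q1 + L < y.
  have [h1|h1] := ltP y (q1 - L); first by left.
  have [h2|h2] := ltP (q1 + L) y; first by right.
  have : y \in `[q1 - L, q1 + L] by rewrite in_itv /= h1 h2.
  by move/qsmin; rewrite leNgt hy.
have q1in : q1 \in `[q1 - L, q1 + L] by rewrite in_itv /=; apply/andP; split; lra.
have gy : g y < c + eta.
  by apply: (lt_trans hy); apply: (le_lt_trans (qsmin _ q1in)).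
have Hw : forall qm, exists w, c - eta <= v w + qm * (alpha - u w).
  move=> qm; have [w hw] := trr_adh w0 HB qm eta e0; exists w.
  have := gc qm; rewrite /g /gconj => h; lra.
have hle : forall q w, v w + q * (alpha - u w) <= g q.
  by move=> q w; have := trr_le w0 HB q w; rewrite /g /gconj; lra.
have hq1L : `|q1| <= L by rewrite /L lerDl.
case: hyout => hyo.
- have [w hw] := Hw (q1 - L / 2); exists w.
  have := hle q1 w; have := hle y w => h2 h1.
  have [r1 r2] := key_arith eta c (v w) (- (alpha - u w)) (- q1) (- (q1 - L / 2)) (- y) L e0 L1
    ltac:(by rewrite normrN) ltac:(by field) ltac:(by lra) ltac:(by rewrite mulrNN; lra)
    ltac:(by rewrite mulrNN; lra) ltac:(by rewrite mulrNN).
  by split => //; rewrite normrN in r1; rewrite distrC.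
- have [w hw] := Hw (q1 + L / 2); exists w.
  have := hle q1 w; have := hle y w => h2 h1.
  have [r1 r2] := key_arith eta c (v w) (alpha - u w) q1 (q1 + L / 2) y L e0 L1
    hq1L erefl ltac:(by lra) ltac:(by lra) ltac:(by lra) hw.
  by split => //; rewrite distrC.
Qed.

Lemma i_to_ii (D : topologicalType) (cD : compact [set: D]) {R : realType} {u v : D -> R}
  (cu : continuous (u : D -> R^o)) (sv : upper_semicontinuous v) (w0 : D) {B : R}
  (HB : forall w, `|u w| <= B /\ v w <= B) :
  (forall q alpha : R, superdiff (tau u v) q alpha -> supported_at u v q alpha) ->
  forall alpha : R, fmax u v alpha = conj_concave (tau u v) alpha.
Proof.
move=> Hi alpha; apply/le_anti; rewrite (part1 w0 HB) /=.
have [[q0 Hq0]|NA] := pselect (exists q0, forall y, gconj u v alpha q0 <= gconj u v alpha y).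
  have := part2 w0 HB q0 alpha (Hi _ _ ((sd_iff w0 HB q0 alpha).2 Hq0)).
  by case=> -> ->.
have NA' : forall q0, exists y, gconj u v alpha y < gconj u v alpha q0.
  move=> q0; apply: contrapT => h; apply: NA; exists q0 => y.
  by rewrite leNgt; apply/negP => hy; apply: h; exists y.
case hc : (conj_concave (tau u v) alpha) => [c| |].
- have Hn : forall n : nat, exists w, `|u w - alpha| <= 4 * (1 / n.+1%:R) /\
      c - 7 * (1 / n.+1%:R) <= v w.
    by move=> n; apply: (stepB w0 HB alpha c _ NA' hc); rewrite divr_gt0.
  have [w Hw] := choice Hn.
  have HH : forall n, alpha - 7 / n.+1%:R <= u (w n) /\ - alpha - 7 / n.+1%:R <= - u (w n) /\
                 c - 7 / n.+1%:R <= v (w n) + (- 0) * u (w n).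
    move=> n; have [e1 e2] := Hw n; move: e1 e2; rewrite !mul1r oppr0 mul0r addr0.
    rewrite ler_norml; set h := _^-1.
    have h0 : 0 < h by rewrite invr_gt0 ltr0Sn.
    move=> /andP [e1 e1'] e2; split; [|split]; lra.
  have [p [h1 [h2 h3]]] := clust3 D cD cu sv w 0 alpha (- alpha) c 7 ltac:(by []) HH.
  have up : u p = alpha by apply/le_anti; rewrite h1 andbT -lerN2.
  apply: le_trans (fmax_ge (v:=v) _ _ up); rewrite lee_fin.
  by move: h3; rewrite oppr0 mul0r addr0.
- have := conj_le w0 HB alpha 0; by rewrite hc.
- exact: leNye.
Qed.

Lemma ii_to_i (D : topologicalType) (cD : compact [set: D]) {R : realType} {u v : D -> R}
  (cu : continuous (u : D -> R^o)) (sv : upper_semicontinuous v) (w0 : D) {B : R}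
  (HB : forall w, `|u w| <= B /\ v w <= B) :
  (forall alpha : R, fmax u v alpha = conj_concave (tau u v) alpha) ->
  forall q alpha : R, superdiff (tau u v) q alpha -> supported_at u v q alpha.
Proof.
move=> H q alpha sd; apply: (L_supp D cD cu sv w0 HB); rewrite H.
apply: (conj_ge w0 HB) => y; rewrite lee_fin; exact: (sd_iff w0 HB q alpha).1 sd y.
Qed.

Lemma conj_concave_ext {D : Type} {R : realType} {u v : D -> R} (w0 : D) {B : R}
  (HB : forall w, `|u w| <= B /\ v w <= B) :
  concave_ext (conj_concave (tau u v)).
Proof.
move=> x y t /andP [t0 t1].
apply: (conj_ge w0 HB) => q.
apply: (@le_trans _ _ ((t%:E * (gconj u v x q)%:E) + ((1 - t)%:E * (gconj u v y q)%:E))%E).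
  apply: leeD; apply: lee_wpmul2l; rewrite ?lee_fin ?subr_ge0; try exact: ltW; exact: (conj_le w0 HB).
rewrite -!EFinM -EFinD lee_fin /gconj le_eqVlt; apply/orP; left; apply/eqP; ring.
Qed.

Lemma danskin (D : topologicalType) (cD : compact [set: D]) {R : realType} {u v : D -> R}
  (cu : continuous (u : D -> R^o)) (sv : upper_semicontinuous v) (w0 : D) {B : R}
  (HB : forall w, `|u w| <= B /\ v w <= B) q alpha :
  superdiff (tau u v) q alpha ->
  (exists p, q * u p - v p <= trr u v q /\ alpha <= u p) /\
  (exists p, q * u p - v p <= trr u v q /\ u p <= alpha).
Proof.
move=> /(sd_iff w0 HB) sd.
have B0 : 0 <= B by apply: le_trans (normr_ge0 _) (HB w0).1.
have a0 := normr_ge0 alpha; have a1 := ler_norm alpha; have a2 := ler_normr alpha.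
have a3 : - `|alpha| <= alpha by rewrite lerNl -normrN ler_norm.
set K := B + `|alpha| + 1.
have K1 : 1 <= K by rewrite /K; lra.
have Kdef : K = B + `|alpha| + 1 by [].
clearbody K.
have Kh : forall n : nat, K / n.+1%:R = K * (1 / n.+1%:R) by move=> n; rewrite mul1r.
have hpos : forall n : nat, 0 < (1 / n.+1%:R : R) /\ (1 / n.+1%:R : R) <= 1.
  move=> n; split; first by rewrite divr_gt0.
  by rewrite ler_pdivrMr ?ltr0Sn // mul1r ler1n.
split.
- have Hn : forall n : nat, exists w, (q - 1 / n.+1%:R) * u w - v w <
      trr u v (q - 1 / n.+1%:R) + (1 / n.+1%:R) * (1 / n.+1%:R).
    move=> n; apply: (trr_adh w0 HB); have [h0 _] := hpos n; exact: mulr_gt0.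
  have [w Hw] := choice Hn.
  have HH : forall n, alpha - K / n.+1%:R <= u (w n) /\ - B - K / n.+1%:R <= - u (w n) /\
                 - trr u v q - K / n.+1%:R <= v (w n) + (- q) * u (w n).
    move=> n; rewrite Kh; have [h0 h1] := hpos n; have := Hw n; have := sd (q - 1 / n.+1%:R).
    have := trr_le w0 HB q (w n); have [b1 b2] := HB (w n).
    move: b1; rewrite ler_norml => /andP [b1 b1'].
    move=> e1 e2 e3; rewrite /gconj in e2; set h := 1 / n.+1%:R in h0 h1 e1 e2 e3 *; set U := u (w n) in b1 b1' e1 e2 e3 *.
    have s1 : h * (alpha - U) < h * h by lra.
    have s2 : alpha - U < h by rewrite -(ltr_pM2l h0).
    have s3 : h <= K * h by rewrite ler_peMl // ltW.
    have s4 : h * U <= h * B by rewrite ler_pM2l.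
    have s5 : - (h * alpha) <= h * `|alpha| by rewrite -mulrN ler_pM2l // lerNl.
    have s6 : h * h <= h by rewrite ger_pMr.
    have s7 : h * B + h * `|alpha| + h <= K * h by rewrite Kdef; lra.
    have s8 : 0 <= K * h by rewrite mulr_ge0 // ?ltW //; lra.
    split; [lra|split; lra].
  have [p [h1 [h2 h3]]] := clust3 D cD cu sv w q alpha (- B) (- trr u v q) K ltac:(lra) HH.
  by exists p; split; lra.
- have Hn : forall n : nat, exists w, (q + 1 / n.+1%:R) * u w - v w <
      trr u v (q + 1 / n.+1%:R) + (1 / n.+1%:R) * (1 / n.+1%:R).
    move=> n; apply: (trr_adh w0 HB); have [h0 _] := hpos n; exact: mulr_gt0.
  have [w Hw] := choice Hn.
  have HH : forall n, - B - K / n.+1%:R <= u (w n) /\ - alpha - K / n.+1%:R <= - u (w n) /\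
                 - trr u v q - K / n.+1%:R <= v (w n) + (- q) * u (w n).
    move=> n; rewrite Kh; have [h0 h1] := hpos n; have := Hw n; have := sd (q + 1 / n.+1%:R).
    have := trr_le w0 HB q (w n); have [b1 b2] := HB (w n).
    move: b1; rewrite ler_norml => /andP [b1 b1'].
    move=> e1 e2 e3; rewrite /gconj in e2; set h := 1 / n.+1%:R in h0 h1 e1 e2 e3 *; set U := u (w n) in b1 b1' e1 e2 e3 *.
    have s1 : h * (U - alpha) < h * h by lra.
    have s2 : U - alpha < h by rewrite -(ltr_pM2l h0).
    have s3 : h <= K * h by rewrite ler_peMl // ltW.
    have s4 : - (h * U) <= h * B by rewrite -mulrN ler_pM2l // lerNl.
    have s5 : h * alpha <= h * `|alpha| by rewrite ler_pM2l.
    have s6 : h * h <= h by rewrite ger_pMr.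
    have s7 : h * B + h * `|alpha| + h <= K * h by rewrite Kdef; lra.
    have s8 : 0 <= K * h by rewrite mulr_ge0 // ?ltW //; lra.
    split; [lra|split; lra].
  have [p [h1 [h2 h3]]] := clust3 D cD cu sv w q (- B) (- alpha) (- trr u v q) K ltac:(lra) HH.
  by exists p; split; lra.
Qed.

Lemma conc_to_i (D : topologicalType) (cD : compact [set: D]) {R : realType} {u v : D -> R}
  (cu : continuous (u : D -> R^o)) (sv : upper_semicontinuous v) (w0 : D) {B : R}
  (HB : forall w, `|u w| <= B /\ v w <= B) :
  concave_ext (fmax u v) ->
  forall q alpha : R, superdiff (tau u v) q alpha -> supported_at u v q alpha.
Proof.
move=> Hc q alpha sd.
have [[pp [hp1 hp2]] [pm [hm1 hm2]]] := danskin D cD cu sv w0 HB q alpha sd.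
apply: (L_supp D cD cu sv w0 HB).
have fm : forall p, q * u p - v p <= trr u v q ->
    ((q * u p - trr u v q)%:E <= fmax u v (u p))%E.
  move=> p hp; apply: le_trans (fmax_ge (v:=v) _ p erefl); rewrite lee_fin; lra.
have [ea|ea] := eqVneq (u pm) alpha.
  by rewrite -ea /gconj; apply: fm.
have [eb|eb] := eqVneq (u pp) alpha.
  by rewrite -eb /gconj; apply: fm.
set a := u pm in hm1 hm2 ea fm *; set b := u pp in hp1 hp2 eb fm *.
have ha : a < alpha by rewrite lt_neqAle ea.
have hb : alpha < b by rewrite lt_neqAle eq_sym eb.
set t := (b - alpha) / (b - a).
have ba : 0 < b - a by rewrite subr_gt0; exact: lt_trans ha hb.
have t0 : 0 < t by rewrite divr_gt0 // subr_gt0.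
have t1 : t < 1 by rewrite ltr_pdivrMr // mul1r; lra.
have ept : t * a + (1 - t) * b = alpha.
  by rewrite /t; field; apply/eqP => h; move: ba; rewrite h ltxx.
have := Hc a b t ltac:(by rewrite t0 t1); rewrite ept; apply: le_trans.
apply: (@le_trans _ _ (t%:E * (q * a - trr u v q)%:E + (1 - t)%:E * (q * b - trr u v q)%:E)%E).
  rewrite -!EFinM -EFinD lee_fin /gconj -ept le_eqVlt; apply/orP; left; apply/eqP; ring.
apply: leeD; apply: lee_wpmul2l; rewrite ?lee_fin ?subr_ge0; try exact: ltW.
- by rewrite /a; apply: fm.
- by rewrite /b; apply: fm.
Qed.

Local Open Scope ereal_scope.

Theorem propositionp (R : realType) (D : topologicalType)
  (hD : hausdorff_space D) (cD : compact [set: D]) (w0 : D)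
  (u v : D -> R) (cu : continuous (u : D -> R^o)) (sv : upper_semicontinuous v) :
  (forall alpha : R, fmax u v alpha <= conj_concave (tau u v) alpha) /\
  (forall q alpha : R, supported_at u v q alpha ->
     fmax u v alpha = (q * alpha)%:E - tau u v q /\
     (q * alpha)%:E - tau u v q = conj_concave (tau u v) alpha) /\
  ((forall q alpha : R, superdiff (tau u v) q alpha -> supported_at u v q alpha)
     <-> (forall alpha : R, fmax u v alpha = conj_concave (tau u v) alpha)) /\
  ((forall alpha : R, fmax u v alpha = conj_concave (tau u v) alpha)
     <-> concave_ext (fmax u v)).
Proof.
have [B HB] := HB_exists D cD cu sv.
split; first exact: (part1 w0 HB).
split; first exact: (part2 w0 HB).
have iii := i_to_ii D cD cu sv w0 HB; have iiii := ii_to_i D cD cu sv w0 HB.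
split; first by split.
split => [H | Hc].
- have e : fmax u v = conj_concave (tau u v) by apply: funext.
  rewrite e; exact: (conj_concave_ext w0 HB).
- apply: iii; exact: (conc_to_i D cD cu sv w0 HB Hc).
Qed.
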